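(* Let $(V,g)$ be a 4-dimensional pseudo-Riemannian manifold whose metric in local coordinates $x=(x^1,x^2,x^3,x^4)$ on an open domain reads \[ ds^2=\Phi(x)\big[\Xi_1(dx^1)^2+\Xi_2(dx^2)^2+\Xi_3(dx^3)^2\big]+2\sum_{i=1}^3\beta_i(x)\,dx^idx^4+\Psi(x)(dx^4)^2, \] where $\Xi_i=\Xi_i(x^1,x^2,x^3)$, and $\Phi,\beta_i,\Psi,\Xi_i$ are $C^2$ functions with $\Phi,\Xi_1,\Xi_2,\Xi_3$ nowhere zero and the metric nondegenerate. Let $P^a{}_b$ be the orthogonal projector onto the tangent spaces of the hypersurfaces $x^4=\mathrm{const}$, whose nonzero components are $P^1{}_1=P^2{}_2=P^3{}_3=1$, $P^i{}_4=\beta_i/(\Phi\,\Xi_i)$ ($i=1,2,3$), and let $\Pi_{ab}=g_{ab}-P_{ab}$ (so $p=3$, $n=4$). Then \[ P^r{}_aP^s{}_bP^q{}_cT_{rsq}=0 . \]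
   Context: Indices are raised and lowered with $g$. For a pair of smooth symmetric tensor fields $P_{ab}$, $\Pi_{ab}$ forming at each point orthogonal complementary projectors ($P_{ab}+\Pi_{ab}=g_{ab}$, $P_{aq}P^q{}_b=P_{ab}$, $\Pi_{aq}\Pi^q{}_b=\Pi_{ab}$, $P_{aq}\Pi^q{}_b=0$) with $p=P^a{}_a$, and $\nabla$ the Levi-Civita connection of $g$, define $M_{abc}=\nabla_bP_{ac}+\nabla_cP_{ab}-\nabla_aP_{bc}$, $E_a=M_{acb}P^{cb}$, $W_a=-M_{acb}\Pi^{cb}$, and $T_{abc}=M_{abc}+\frac{1}{n-p}W_a\Pi_{bc}-\frac1pE_aP_{bc}$. *)

(* Defs.v *)
(* Coordinates on an open domain of R^n are row
   vectors 'rV[R]_n; coordinate indices x^1..x^n are the ordinals 0..n-1. *)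
From HB Require Import structures.
From mathcomp Require Import all_boot all_order all_algebra.
From mathcomp Require Import all_classical all_reals all_analysis.
Set Implicit Arguments. Unset Strict Implicit. Unset Printing Implicit Defensive.
Import Order.TTheory GRing.Theory Num.Theory.
Import numFieldNormedType.Exports.
Local Open Scope classical_set_scope.
Local Open Scope ring_scope.

Section TensorCalculus.
Variables (R : realType) (n : nat).
Local Notation pt := 'rV[R]_n.

Definition ebasis (i : 'I_n) : pt := delta_mx 0 i.
Definition partial (i : 'I_n) (f : pt -> R) (x : pt) : R := 'D_(ebasis i) f x.

Definition C1_on (U : set pt) (f : pt -> R) : Prop :=
  (forall x, U x -> {for x, continuous f}) /\
  (forall i x, U x -> derivable f x (ebasis i) /\ {for x, continuous (partial i f)}).
Definition C2_on (U : set pt) (f : pt -> R) : Prop :=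
  C1_on U f /\ forall i, C1_on U (partial i f).

(* A metric g_ab is a matrix-valued field G; Pu x a b = P^a_b (mixed). *)
Variables (G : pt -> 'M[R]_n) (Pu : pt -> 'M[R]_n).

Definition ginv (x : pt) : 'M[R]_n := invmx (G x).

Definition Chr (x : pt) (c a b : 'I_n) : R :=
  2^-1 * \sum_(d < n) ginv x c d *
    (partial a (fun y => G y d b) x + partial b (fun y => G y d a) x
     - partial d (fun y => G y a b) x).

Definition Pdn (x : pt) (a b : 'I_n) : R := \sum_(q < n) G x a q * Pu x q b.
Definition Pidn (x : pt) (a b : 'I_n) : R := G x a b - Pdn x a b.
Definition Pupup (x : pt) (a b : 'I_n) : R :=
  \sum_(c < n) \sum_(d < n) ginv x a c * ginv x b d * Pdn x c d.
Definition Piupup (x : pt) (a b : 'I_n) : R :=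
  \sum_(c < n) \sum_(d < n) ginv x a c * ginv x b d * Pidn x c d.
Definition ptrace (x : pt) : R := \sum_(a < n) Pu x a a.

(* nablaP x b a c = nabla_b P_ac *)
Definition nablaP (x : pt) (b a c : 'I_n) : R :=
  partial b (fun y => Pdn y a c) x
  - \sum_(d < n) (Chr x d b a * Pdn x d c + Chr x d b c * Pdn x a d).

Definition Mt (x : pt) (a b c : 'I_n) : R :=
  nablaP x b a c + nablaP x c a b - nablaP x a b c.
Definition Et (x : pt) (a : 'I_n) : R :=
  \sum_(c < n) \sum_(b < n) Mt x a c b * Pupup x c b.
Definition Wt (x : pt) (a : 'I_n) : R :=
  - \sum_(c < n) \sum_(b < n) Mt x a c b * Piupup x c b.
Definition Tt (x : pt) (a b c : 'I_n) : R :=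
  Mt x a b c + (n%:R - ptrace x)^-1 * Wt x a * Pidn x b c
  - (ptrace x)^-1 * Et x a * Pdn x b c.

End TensorCalculus.

Section Metric4.
Variable R : realType.
Local Notation pt := 'rV[R]_4.
Variables (Phi Psi : pt -> R) (beta Xi : 'I_3 -> pt -> R).

(* indices 0,1,2 <-> x^1,x^2,x^3 ; ord_max = 3 <-> x^4 *)
Definition gmetric (x : pt) : 'M[R]_4 := \matrix_(a, b)
  match unlift ord_max a, unlift ord_max b with
  | Some i, Some j => if i == j then Phi x * Xi i x else 0
  | Some i, None => beta i x
  | None, Some j => beta j x
  | None, None => Psi x
  end.

Definition Pmixed (x : pt) : 'M[R]_4 := \matrix_(a, b)
  match unlift ord_max a, unlift ord_max b with
  | Some i, Some j => if i == j then 1 else 0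
  | Some i, None => beta i x / (Phi x * Xi i x)
  | None, _ => 0
  end.
End Metric4.

(* Main.v *)
Require Import Defs.
From HB Require Import structures.
From mathcomp Require Import all_boot all_order all_algebra.
From mathcomp Require Import all_classical all_reals all_analysis.
From mathcomp Require Import ring lra.
Import Order.TTheory GRing.Theory Num.Theory.
Import numFieldNormedType.Exports.
Local Open Scope classical_set_scope.
Local Open Scope ring_scope.
Section Gen.
Variables (R : realType) (n : nat) (G : 'rV[R]_n -> 'M[R]_n).
Hypothesis Gs : forall y a b, G y a b = G y b a.

Lemma contract (x : 'rV[R]_n) (F : 'I_n -> R) q : G x \in unitmx ->
  \sum_(d < n) (2^-1 * \sum_(e < n) ginv G x d e * F e) * G x d q = 2^-1 * F q.
Proof.
move=> u.
have h : forall d, (2^-1 * \sum_(e < n) ginv G x d e * F e) * G x d q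
   = 2^-1 * \sum_(e < n) (G x q d * ginv G x d e) * F e.
  move=> d; rewrite -mulrA; congr (_ * _); rewrite mulr_suml; apply: eq_bigr => e _.
  by rewrite Gs mulrC mulrA.
rewrite (eq_bigr _ (fun d _ => h d)) -mulr_sumr exchange_big /=; congr (_ * _).
have h2 : forall e, \sum_(d < n) G x q d * ginv G x d e * F e = (q == e)%:R * F e.
  move=> e; rewrite -mulr_suml; congr (_ * _).
  have := congr1 (fun M : 'M[R]_n => M q e) (mulmxV u).
  by rewrite mxE /= => ->; rewrite mxE.
rewrite (eq_bigr _ (fun e _ => h2 e)) (bigD1 q) //= eqxx mul1r big1 ?addr0 //.
by move=> e /negbTE; rewrite eq_sym => ->; rewrite mul0r.
Qed.

Lemma psym i a b x : partial i (fun y => G y a b) x = partial i (fun y => G y b a) x.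
Proof. by congr (partial i _ x); apply: funext => y; rewrite Gs. Qed.

Lemma chr_contract x b r q : G x \in unitmx ->
  \sum_(d < n) Chr G x d b r * G x d q =
  2^-1 * (partial b (fun y => G y q r) x + partial r (fun y => G y q b) x
     - partial q (fun y => G y b r) x).
Proof.
move=> u; rewrite /Chr.
exact: (@contract x (fun e => partial b (fun y => G y e r) x
   + partial r (fun y => G y e b) x - partial e (fun y => G y b r) x)).
Qed.

Lemma compat x b r q : G x \in unitmx ->
  \sum_(d < n) (Chr G x d b r * G x d q + Chr G x d b q * G x r d)
  = partial b (fun y => G y r q) x.
Proof.
move=> u; rewrite big_split /=.
rewrite [X in _ + X](eq_bigr (fun d => Chr G x d b q * G x d r)); last by move=> d _; rewrite Gs.
rewrite !chr_contract //.
rewrite (psym r q b) (psym b q r).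
rewrite (psym b r q).
rewrite (psym q r b).
set A := partial b _ x; set B := partial r _ x; set C := partial q _ x.
rewrite -mulrDr.
have -> : A + B - C + (A + C - B) = A *+ 2 by rewrite mulr2n; ring.
by rewrite -(mulr_natl A 2) mulrA mulVf ?mul1r ?pnatr_eq0.
Qed.
End Gen.
Section S.
Variables (R : realType) (Phi Psi : 'rV[R]_4 -> R) (beta Xi : 'I_3 -> 'rV[R]_4 -> R).
Local Notation G := (gmetric Phi Psi beta Xi).
Local Notation P := (Pmixed Phi beta Xi).
Local Notation L i := (lift (@ord_max 3) i).

Lemma G_sym y a b : G y a b = G y b a.
Proof.
rewrite !mxE; case: (unlift ord_max a) => [i|]; case: (unlift ord_max b) => [j|] //.
by rewrite eq_sym; case: eqP => // ->.
Qed.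

Lemma P_max y c : P y ord_max c = 0.
Proof. by rewrite mxE unlift_none. Qed.

Lemma P_LL y i j : P y (L i) (L j) = (i == j)%:R.
Proof. by rewrite mxE !liftK; case: eqP. Qed.

Lemma P_col y m j : P y m (L j) = (m == L j)%:R.
Proof.
case: (unliftP ord_max m) => [i ->|->].
  by rewrite P_LL (inj_eq lift_inj).
by rewrite P_max (negbTE (neq_lift _ _)).
Qed.

Lemma Pdn_col y a j : Pdn G P y a (L j) = G y a (L j).
Proof.
rewrite /Pdn (bigD1 (L j)) //= P_col eqxx mulr1 big1 ?addr0 // => m /negbTE hm.
by rewrite P_col hm mulr0.
Qed.
Lemma G_LL y i j : G y (L i) (L j) = if i == j then Phi y * Xi i y else 0.
Proof. by rewrite mxE !liftK. Qed.
Lemma G_Lm y i : G y (L i) ord_max = beta i y.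
Proof. by rewrite mxE liftK unlift_none. Qed.
Lemma P_Lm y i : P y (L i) ord_max = beta i y / (Phi y * Xi i y).
Proof. by rewrite mxE liftK unlift_none. Qed.

Lemma Pdn_rowm y i : Phi y * Xi i y != 0 ->
  Pdn G P y (L i) ord_max = G y (L i) ord_max.
Proof.
move=> nz; rewrite /Pdn (bigD1 (L i)) //= G_LL eqxx P_Lm big1 ?addr0.
  by rewrite G_Lm mulrC divfK.
move=> m /= hm; case: (unliftP ord_max m) hm => [k ->|->] hm.
  rewrite G_LL; have [eik|hik] := eqVneq i k; first by rewrite eik eqxx in hm.
  by rewrite mul0r.
by rewrite P_max mulr0.
Qed.

Lemma Pdn_row y a b : (forall i, Phi y * Xi i y != 0) -> a != ord_max ->
  Pdn G P y a b = G y a b.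
Proof.
move=> nz; case: (unliftP ord_max a) => [i ->|->] ha; last by rewrite eqxx in ha.
case: (unliftP ord_max b) => [j ->|->]; first by rewrite Pdn_col.
exact: Pdn_rowm.
Qed.

Lemma Pdn_colg y a b : b != ord_max -> Pdn G P y a b = G y a b.
Proof. by case: (unliftP ord_max b) => [j ->|->] hb; [rewrite Pdn_col|rewrite eqxx in hb]. Qed.

Lemma Pdn_sym y a b : (forall i, Phi y * Xi i y != 0) -> Pdn G P y a b = Pdn G P y b a.
Proof.
move=> nz; have [->|ha] := eqVneq a ord_max.
  have [->//|hb] := eqVneq b ord_max.
  by rewrite (Pdn_row y b ord_max nz hb) (Pdn_colg y ord_max b hb) G_sym.
by rewrite (Pdn_row y a b nz ha) (Pdn_colg y b a ha) G_sym.
Qed.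
Section Main.
Variable (x : 'rV[R]_4).
Hypothesis nz : forall i, Phi x * Xi i x != 0.
Hypothesis u : G x \in unitmx.

Lemma nabla0 b r q : r != ord_max -> q != ord_max -> nablaP G P x b r q = 0.
Proof.
move=> hr hq; rewrite /nablaP.
have -> : (fun y => Pdn G P y r q) = (fun y => G y r q).
  by apply: funext => y; rewrite Pdn_colg.
rewrite (eq_bigr (fun d => Chr G x d b r * G x d q + Chr G x d b q * G x r d)).
  by rewrite compat ?subrr //; exact: G_sym.
by move=> d _; rewrite Pdn_colg // Pdn_row.
Qed.

Lemma Mt0 r s q : r != ord_max -> s != ord_max -> q != ord_max -> Mt G P x r s q = 0.
Proof. by move=> hr hs hq; rewrite /Mt !nabla0 // addr0 subr0. Qed.

Lemma ginvPdn a d : \sum_(c < 4) ginv G x a c * Pdn G P x c d = P x a d.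
Proof.
rewrite /Pdn.
under eq_bigr do rewrite mulr_sumr.
rewrite exchange_big /=.
under eq_bigr do under eq_bigr do rewrite mulrA.
under eq_bigr do rewrite -mulr_suml.
have h : forall q, \sum_(c < 4) ginv G x a c * G x c q = (a == q)%:R.
  move=> q; have := congr1 (fun M : 'M[R]_4 => M a q) (mulVmx u).
  by rewrite !mxE.
under eq_bigr do rewrite h.
rewrite (bigD1 a) //= eqxx mul1r big1 ?addr0 // => q /negbTE.
by rewrite eq_sym => ->; rewrite mul0r.
Qed.

Lemma Pupup_max b : Pupup G P x ord_max b = 0.
Proof.
rewrite /Pupup.
under eq_bigr do under eq_bigr do rewrite mulrAC.
rewrite exchange_big /=.
under eq_bigr do rewrite -mulr_suml ginvPdn P_max mul0r.
by rewrite big1.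
Qed.

Lemma Pupup_sym a b : Pupup G P x a b = Pupup G P x b a.
Proof.
rewrite /Pupup exchange_big /=; apply: eq_bigr => c _; apply: eq_bigr => d _.
by rewrite [ginv G x b c * _]mulrC (Pdn_sym _ _ _ nz).
Qed.

Lemma Et0 r : r != ord_max -> Et G P x r = 0.
Proof.
move=> hr; rewrite /Et big1 // => c _; rewrite big1 // => b _.
have [->|hc] := eqVneq c ord_max; first by rewrite Pupup_max mulr0.
have [->|hb] := eqVneq b ord_max; first by rewrite Pupup_sym Pupup_max mulr0.
by rewrite Mt0 // mul0r.
Qed.

Lemma Tt0 r s q : r != ord_max -> s != ord_max -> q != ord_max -> Tt G P x r s q = 0.
Proof.
move=> hr hs hq; rewrite /Tt Mt0 // Et0 // /Pidn Pdn_colg //.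
ring.
Qed.
End Main.
End S.

Theorem mainTheorem13 (R : realType) (U : set 'rV[R]_4)
  (Phi Psi : 'rV[R]_4 -> R) (beta Xi : 'I_3 -> 'rV[R]_4 -> R) :
  open U ->
  C2_on U Phi -> C2_on U Psi ->
  (forall i, C2_on U (beta i)) -> (forall i, C2_on U (Xi i)) ->
  (forall x, U x -> Phi x != 0) ->
  (forall i x, U x -> Xi i x != 0) ->
  (* Xi_i depends only on (x^1, x^2, x^3) *)
  (forall i x y, U x -> U y -> (forall j : 'I_4, j != ord_max -> x 0 j = y 0 j) ->
     Xi i x = Xi i y) ->
  (* nondegenerate metric *)
  (forall x, U x -> \det (gmetric Phi Psi beta Xi x) != 0) ->
  forall x, U x -> forall a b c : 'I_4,
    \sum_(r < 4) \sum_(s < 4) \sum_(q < 4)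
      Pmixed Phi beta Xi x r a * Pmixed Phi beta Xi x s b * Pmixed Phi beta Xi x q c *
      Tt (gmetric Phi Psi beta Xi) (Pmixed Phi beta Xi) x r s q = 0.
Proof.
move=> _ _ _ _ _ hPhi hXi _ hdet x Ux a b c.
have nz : forall i, Phi x * Xi i x != 0 by move=> i; rewrite mulf_neq0 ?hPhi ?hXi.
have u : gmetric Phi Psi beta Xi x \in unitmx by rewrite unitmxE unitfE hdet.
apply: big1 => r _; apply: big1 => s _; apply: big1 => q _.
have [->|hr] := eqVneq r ord_max; first by rewrite P_max !mul0r.
have [->|hs] := eqVneq s ord_max; first by rewrite P_max mulr0 !mul0r.
have [->|hq] := eqVneq q ord_max; first by rewrite P_max mulr0 mul0r.
by rewrite Tt0 // mulr0.
Qed.
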